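(* There is an absolute constant $K>0$ such that the following holds. Let $U \geqslant 2$ and $n\geqslant 2$ be integers. Let $A, B, X \subseteq [U]$ with $|A|=|B|=n$ and $X$ nonempty. Then there exists a set $M$ of integers with the following properties: - $|M| \leqslant 1 + \log_2 |X|$; - $M \subseteq [n^{1.5}, 8n^{1.5})$; - for every $x \in X$ there exists $m \in M$ with \[\#\{(a,b) \in A \times B : a+b \equiv x \pmod m \ \text{and}\ a+b \neq x\} \leqslant K\sqrt n\,(\log U)^3.\]
   Context: $[U] := \{0,1,\ldots,U-1\}$; $[x,y)$ for reals denotes the half-open real interval. *)

(* Defs.v *)
(* sets of integers as duplicate-free lists. *)
From Stdlib Require Import Reals ZArith List Lia Lra.
Import ListNotations.
Open Scope R_scope.

Definition bad_count (A B : list Z) (m x : Z) : nat :=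
  length (filter (fun p : Z * Z =>
            Z.eqb (Z.modulo (fst p + snd p - x) m) 0
            && negb (Z.eqb (fst p + snd p) x))%bool
          (list_prod A B)).

(* s is a subset of [U] = {0,...,U-1} *)
Definition subset_range (U : Z) (s : list Z) : Prop :=
  forall a, In a s -> (0 <= a < U)%Z.

(* Main.v *)
Require Import Defs.
From mathcomp Require Import all_boot zify.
Set Implicit Arguments. Unset Strict Implicit. Unset Printing Implicit Defensive.
Lemma sum_ind_le (t n : nat) : \sum_(1 <= k < n.+1) (k <= t) <= minn n t.
Proof.
elim: n => [|n IH]; first by rewrite big_geq.
rewrite big_nat_recr //=. case: (leqP n.+1 t) => H; lia.
Qed.

Lemma sum_ext_zero (p m : nat) : 1 < p ->
  \sum_(1 <= k < (m.*2).+1) m %/ p ^ k = \sum_(1 <= k < m.+1) m %/ p ^ k.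
Proof.
move=> p1. rewrite (big_cat_nat _ (n:=m.+1)) //=; last lia.
rewrite [X in _ + X]big1_seq ?addn0 // => k /andP[_]; rewrite mem_index_iota => /andP[Hk _].
apply: divn_small. apply: leq_trans (ltn_expl m p1) _.
rewrite leq_exp2l //; lia.
Qed.

Lemma legendre_mid (p m : nat) : prime p -> 0 < m -> p ^ logn p 'C(m.*2, m) <= m.*2.
Proof.
move=> pp m0. have p1 := prime_gt1 pp.
have m2 : 0 < m.*2 by lia.
set t := trunc_log p m.*2.
suff H : logn p 'C(m.*2, m) <= t.
  apply: leq_trans (trunc_logP p1 m2). by rewrite leq_exp2l.
have bf : 'C(m.*2, m) * (m`! * m`!) = (m.*2)`!.
  have := @bin_fact (m.*2) m. rewrite -addnn addnK. apply. lia.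
have Cpos : 0 < 'C(m.*2, m) by rewrite bin_gt0; lia.
have : logn p (m.*2)`! = logn p 'C(m.*2, m) + (logn p m`! + logn p m`!).
  rewrite -bf lognM ?muln_gt0 ?fact_gt0 // lognM ?fact_gt0 //.
rewrite !logn_fact // -(sum_ext_zero m p1) => E.
have L1 : \sum_(1 <= k < (m.*2).+1) m.*2 %/ p ^ k <=
   \sum_(1 <= k < (m.*2).+1) ((m %/ p ^ k).*2 + (k <= t)).
  apply: leq_sum => k _.
  case: (leqP k t) => Hk.
  - have q0 : 0 < p ^ k by rewrite expn_gt0; lia.
    have h := ltn_ceil m q0.
    rewrite addn1 -ltnS ltn_divLR //. lia.
  - rewrite addn0. have : m.*2 < p ^ k.
      apply: leq_trans (trunc_log_ltn _ p1) _. by rewrite leq_exp2l.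
    by move=> h; rewrite divn_small.
rewrite big_split /= in L1.
have := sum_ind_le t (m.*2).
have D2 : \sum_(1 <= k < (m.*2).+1) (m %/ p ^ k).*2 = (\sum_(1 <= k < (m.*2).+1) m %/ p ^ k).*2.
  rewrite -[RHS]muln2 big_distrl; apply: eq_bigr => k _; by rewrite -muln2.
rewrite D2 in L1.
lia.
Qed.
Lemma binmid_le (m : nat) : 'C(m.*2.+1, m) <= 4 ^ m.
Proof.
have S := expnDn 1 1 (m.*2.+1).
rewrite (bigD1 (inord m)) //= (bigD1 (inord m.+1)) /= in S; last first.
  apply/eqP => /(f_equal val); rewrite /= !inordK; lia.
rewrite !inordK in S; try lia.
rewrite !exp1n !muln1 in S.
have E : 'C(m.*2.+1, m.+1) = 'C(m.*2.+1, m).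
  rewrite -(bin_sub (n:=m.*2.+1) (m:=m)); last lia. congr binomial; lia.
rewrite E in S.
have : 2 * 'C(m.*2.+1, m) <= 2 ^ m.*2.+1 by rewrite S; lia.
have -> : 4 ^ m = 2 ^ m.*2 by rewrite -[4]/(2 ^ 2) -expnM mul2n.
rewrite expnS. lia.
Qed.

Definition prim n := \prod_(0 <= p < n.+1 | prime p) p.



Lemma prime_ndvd_fact p k : prime p -> k < p -> ~~ (p %| k`!).
Proof.
move=> pp kp. elim: k kp => [|k IH] kp; first by rewrite fact0 dvdn1; case: eqP pp => // ->.
rewrite factS Euclid_dvdM // negb_or IH ?andbT; last lia.
apply/negP => /dvdn_leq; lia.
Qed.

Lemma coprime_prod_big (r : seq nat) (P : pred nat) n :
  (forall p, p \in r -> P p -> coprime p n) -> coprime (\prod_(p <- r | P p) p) n.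
Proof.
move=> H. rewrite big_seq_cond. elim/big_ind: _ => //; first exact: coprime1n.
  2: by move=> p /andP[]; apply: H.
by move=> a b Ha Hb; rewrite coprimeMl Ha Hb.
Qed.

Lemma prod_sub_dvd (r : seq nat) (P : pred nat) :
  \prod_(p <- r | P p) p %| \prod_(p <- r) p.
Proof. by rewrite [X in _ %| X](bigID P) /= dvdn_mulr. Qed.

Lemma mid_dvd m : \prod_(m.+2 <= p < m.*2.+2 | prime p) p %| 'C(m.*2.+1, m).
Proof.
have bf : 'C(m.*2.+1, m) * (m`! * m.+1`!) = (m.*2.+1)`!.
  have := @bin_fact (m.*2.+1) m. have -> : m.*2.+1 - m = m.+1 by lia. apply; lia.
have cop : coprime (\prod_(m.+2 <= p < m.*2.+2 | prime p) p) (m`! * m.+1`!).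
  apply: coprime_prod_big => p; rewrite mem_index_iota => /andP[h1 _] pp.
  rewrite coprimeMr !prime_coprime // !prime_ndvd_fact //; lia.
rewrite -(Gauss_dvdl _ cop) bf (fact_split (m:=m.+1)); last lia.
apply: dvdn_mull. exact: prod_sub_dvd.
Qed.

Lemma prim_le n : prim n <= 4 ^ n.
Proof.
elim/ltn_ind: n => n IH.
case: (boolP (prime n)) => pn; last first.
  case: n IH pn => [|n] IH pn; first by rewrite /prim big_mkcond big_nat1.
  rewrite /prim big_mkcond big_nat_recr //= (negbTE pn) muln1 -big_mkcond.
  apply: leq_trans (IH n (ltnSn n)) _. rewrite leq_exp2l //.
case: (even_prime pn) => [->|on]; first by rewrite /prim big_mkcond !big_nat_recr //= big_geq.
have := odd_double_half n. rewrite on /= => E.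
set m := n./2 in E.
have m1 : 0 < m by move: (prime_gt1 pn); lia.
have -> : prim n = prim m.+1 * \prod_(m.+2 <= p < m.*2.+2 | prime p) p.
  rewrite /prim -E add1n (big_cat_nat _ (n:=m.+2)) //=; lia.
have H1 : prim m.+1 <= 4 ^ m.+1 by apply: IH; lia.
have H2 : \prod_(m.+2 <= p < m.*2.+2 | prime p) p <= 4 ^ m.
  apply: leq_trans (binmid_le m). apply: dvdn_leq; last exact: mid_dvd.
  rewrite bin_gt0; lia.
apply: leq_trans (leq_mul H1 H2) _.
rewrite -expnD leq_exp2l //; lia.
Qed.

Lemma binA m : 4 ^ m <= m.*2.+1 * 'C(m.*2, m).
Proof.
elim: m => [|m IH]; first by rewrite bin0.
have e1 : m.+1 * 'C(m.*2.+1, m) = m.*2.+1 * 'C(m.*2, m).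
  have := mul_bin_diag (m.*2.+1) m. rewrite /= => ->.
  rewrite -(bin_sub (n:=m.*2.+1) (m:=m.+1)); last lia. congr (_ * binomial _ _); lia.
have e2 : m.+1 * 'C(m.+1.*2, m.+1) = m.+1.*2 * 'C(m.*2.+1, m).
  have := mul_bin_diag (m.+1.*2) m. rewrite /= => <-. by rewrite doubleS.
have C0 : 0 < 'C(m.*2, m) by rewrite bin_gt0; lia.
have e3 : 'C(m.+1.*2, m.+1) = 2 * 'C(m.*2.+1, m).
  apply/eqP; rewrite -(eqn_pmul2l (ltn0Sn m)) e2; apply/eqP; lia.
rewrite e3 expnS.
suff : m.+1 * (4 * 4 ^ m) <= m.+1 * ((m.+1).*2.+1 * (2 * 'C(m.*2.+1, m))).
  by rewrite leq_pmul2l.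
have -> : m.+1 * ((m.+1).*2.+1 * (2 * 'C(m.*2.+1, m))) = (m.+1).*2.+1 * 2 * (m.+1 * 'C(m.*2.+1, m)) by lia.
rewrite e1.
nia.
Qed.

Lemma count_lt_iota k n : count (fun p => p < k) (iota 0 n) = minn n k.
Proof.
elim: n => [|n IH] //; first by rewrite min0n.
rewrite -addn1 iotaD count_cat IH /= add0n addn0. case: (ltnP n k) => h; lia.
Qed.

Lemma logn_big p n0 a : 0 < n0 -> (prime p -> p ^ logn p n0 <= a) -> a < p -> logn p n0 = 0.
Proof.
move=> n0p H ap. case: (boolP (prime p)) => pp; last by rewrite /logn (negbTE pp).
have := H pp. case E: (logn p n0) => [//|k].
rewrite expnS => h. have : p <= p * p ^ k by rewrite leq_pmulr // expn_gt0 prime_gt0.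
lia.
Qed.

Lemma binB N r : 0 < N -> (N.*2).*2 < r.+1 * r.+1 ->
  'C((N.*2).*2, N.*2) <=
    ((N.*2).*2) ^ r.+1 * prim N * ((N.*2).*2) ^ (count prime (index_iota N.+1 ((N.*2).*2).+1)).
Proof.
set a := (N.*2).*2 => N0 ar.
set n0 := 'C(a, N.*2).
have n0pos : 0 < n0 by rewrite /n0 bin_gt0 /a; lia.
have vle : forall p, prime p -> p ^ logn p n0 <= a.
  move=> p pp. apply: legendre_mid => //; lia.
rewrite -{1}(partnT n0pos) (@widen_partn (n0 + a) predT n0); last lia.

rewrite (big_cat_nat _ (n:=a.+1)) //=; last lia.
rewrite [X in _ * X]big1_seq ?muln1; last first.
  move=> p /andP[_]; rewrite mem_index_iota => /andP[h _]. by rewrite (logn_big n0pos (vle p)).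
rewrite (big_cat_nat _ (n:=N.+1)) //=; last lia.
apply: leq_mul.
- have E1 : \prod_(0 <= i < N.+1 | i \in predT) i ^ logn i n0 <=
     \prod_(0 <= i < N.+1) ((if prime i && (i * i <= a) then a else 1) * (if prime i then i else 1)).
    apply: leq_prod => p _.
    case: (boolP (prime p)) => pp /=; last by rewrite /logn (negbTE pp).
    have p1 := prime_gt1 pp.
    case: (leqP (p * p) a) => h.
      apply: leq_trans (vle p pp) _. rewrite leq_pmulr //; lia.
    rewrite mul1n. have := vle p pp. case E: (logn p n0) => [|[|k]] /=; try lia.
    rewrite !expnS. move=> hh. have : p * p <= p * (p * p ^ k).
      rewrite leq_pmul2l ?leq_pmulr ?expn_gt0; lia.
    lia.
  apply: (leq_trans E1). rewrite big_split /=. apply: leq_mul.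
    rewrite -big_mkcond big_const_seq iter_muln_1 leq_pexp2l //; first lia.
    rewrite /index_iota subn0.
    apply: leq_trans (_ : _ <= count (fun p => p < r.+1) (iota 0 N.+1)) _; last by rewrite count_lt_iota; lia.
    apply: sub_count => p /= /andP[_ h]. nia.
  by rewrite /prim [X in _ <= X]big_mkcond.
- apply: leq_trans (_ : \prod_(N.+1 <= i < a.+1) (if prime i then a else 1) <= _).
    apply: leq_prod => p _.
    case: (boolP (prime p)) => pp /=; last by rewrite /logn (negbTE pp).
    exact: vle.
  by rewrite -big_mkcond big_const_seq iter_muln_1.
Qed.

Lemma cheb N r : 0 < N -> (N.*2).*2 < r.+1 * r.+1 ->
  4 ^ (N.*2) <= ((N.*2).*2).+1 * ((N.*2).*2) ^ r.+1 * 4 ^ N *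
     ((N.*2).*2) ^ (count prime (index_iota N.+1 ((N.*2).*2).+1)).
Proof.
move=> N0 ar.
apply: leq_trans (binA (N.*2)) _.
rewrite -!mulnA leq_mul2l; apply/orP; right.
apply: leq_trans (binB N0 ar) _.
rewrite mulnA leq_mul2r; apply/orP; right.
rewrite leq_mul2l; apply/orP; right. exact: prim_le.
Qed.

Lemma small_has N p : N < p <= (N.*2).*2 -> prime p ->
  0 < count prime (index_iota N.+1 ((N.*2).*2).+1).
Proof.
move=> /andP[h1 h2] pp. rewrite -has_count. apply/hasP. exists p => //.
rewrite mem_index_iota; lia.
Qed.

Lemma small_range N : 3 <= N -> N < (21 * 1000 + 1) ->
  0 < count prime (index_iota N.+1 ((N.*2).*2).+1).
Proof.
move=> h1 h2.
case: (ltnP N 5) => a1. apply: (small_has (p:=5)); [lia| by vm_compute].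
case: (ltnP N 19) => a2. apply: (small_has (p:=19)); [lia| by vm_compute].
case: (ltnP N 73) => a3. apply: (small_has (p:=73)); [lia| by vm_compute].
case: (ltnP N 283) => a4. apply: (small_has (p:=283)); [lia| by vm_compute].
case: (ltnP N 1129) => a5. apply: (small_has (p:=1129)); [lia| by vm_compute].
case: (ltnP N 4513) => a6. apply: (small_has (p:=4513)); [lia| by vm_compute].
case: (ltnP N (10 * 1000 + 7)) => a7. apply: (small_has (p:=(10 * 1000 + 7))); [lia| by vm_compute].
apply: (small_has (p:=(21 * 1000 + 1))); [lia| by vm_compute].
Qed.

Unset Implicit Arguments. Set Strict Implicit.

From Stdlib Require Import Reals ZArith List Lia Lra.
From Stdlib Require Znumtheory FinFun.
From Stdlib Require Import Classical.
Import ListNotations.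

Lemma iota_seq m n : iota m n = List.seq m n.
Proof. elim: n m => [|n IH] m //=; by rewrite IH. Qed.

Lemma count_len (f : nat -> bool) l : count f l = length (List.filter f l).
Proof. elim: l => [|x l IH] //=. case: (f x) => /=; lia. Qed.

Lemma expn_pow a b : expn a b = Nat.pow a b.
Proof. elim: b => [|b IH] //. by rewrite expnS IH Nat.pow_succ_r'. Qed.

Lemma prime_bridge p : prime p -> Znumtheory.prime (Z.of_nat p).
Proof.
move=> pp. apply/Znumtheory.prime_alt. split; first by have := prime_gt1 pp; lia.
move=> n [h1 h2] [k hk].
have k0 : (0 <= k)%Z by nia.
have : (Z.to_nat n %| p)%nat.
  apply/dvdnP; exists (Z.to_nat k). lia.
case/primeP: pp => _ H /H /orP[] /eqP; lia.
Qed.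

Open Scope R_scope.

Lemma lnle x y : 0 < x -> x <= y -> ln x <= ln y.
Proof. move=> hx hxy. case: (Rle_lt_or_eq_dec _ _ hxy) => h. left; apply: ln_increasing => //. by rewrite h; right. Qed.

Lemma ln_sub1 u : 0 < u -> ln u <= u - 1.
Proof. move=> hu. have h := exp_ineq1_le (u - 1). rewrite -[X in _ <= X](ln_exp (u-1)). apply: lnle => //; lra. Qed.

Lemma ln2_le1 : ln 2 <= 1.
Proof. rewrite -[X in _ <= X]ln_exp. apply: lnle; first lra. have := exp_ineq1_le 1. lra. Qed.

Lemma ln3_ge1 : 1 <= ln 3.
Proof. rewrite -[X in X <= _]ln_exp. apply: lnle; [apply: exp_pos| apply: exp_le_3]. Qed.

Lemma ln_pos' x : 1 <= x -> 0 <= ln x.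
Proof. move=> h. rewrite -ln_1. apply: lnle; lra. Qed.

Lemma INR_expn a b : INR (expn a b) = (INR a) ^ b.
Proof. rewrite expn_pow. exact: pow_INR. Qed.

Lemma INR_big a b c d : INR (muln (muln (muln a b) c) d) = INR a * INR b * INR c * INR d.
Proof. by rewrite !mult_INR. Qed.

Lemma prime_density (M : nat) : (3 <= M)%nat ->
  exists P : list Z, NoDup P /\
   (forall p, In p P -> Znumtheory.prime p /\ (Z.of_nat M < p <= 4 * Z.of_nat M)%Z) /\
   INR M <= 30000 * INR (length P) * ln (INR M).
Proof.
move=> N3.
set L := List.filter prime (List.seq M.+1 (3 * M)%nat).
exists (List.map Z.of_nat L).
have HQ : length (List.map Z.of_nat L) = count prime (index_iota M.+1 ((M.*2).*2).+1).
  rewrite length_map count_len /index_iota iota_seq /L.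
  have -> : ((M.*2).*2.+1 - M.+1 = 3 * M)%nat by lia. done.
split; [|split].
- apply: FinFun.Injective_map_NoDup; first by move=> a b; lia.
  apply: NoDup_filter. exact: seq_NoDup.
- move=> p /in_map_iff [q [<- /filter_In [/in_seq hq pq]]].
  split; first exact: prime_bridge. lia.
- rewrite HQ. set Q := count _ _.
  have lnN : 1 <= ln (INR M).
    apply: Rle_trans ln3_ge1 _. apply: lnle; first lra.
    have h : INR 3 <= INR M by apply: le_INR; lia.
    simpl in h. lra.
  case: (ltnP M (21 * 1000 + 1)) => hN.
  + have Q1 : INR 1 <= INR Q by apply: le_INR; have := small_range N3 hN; lia.
    have h : INR M <= INR (21 * 1000 + 1) by apply: le_INR; lia.
    rewrite plus_INR mult_INR in h. simpl in h, Q1. nra.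
  + set y := INR M.
    have hy : 21001 <= y.
      have h : INR (21 * 1000 + 1) <= INR M by apply: le_INR; lia.
      rewrite plus_INR mult_INR in h. simpl in h. rewrite /y; lra.
    set s := Nat.sqrt M.
    have [hs1 hs2] := Nat.sqrt_spec M (Nat.le_0_l M).
    set r := (2 * s).+1.
    have hr : ((M.*2).*2 < r.+1 * r.+1)%nat by rewrite /r; nia.
    have M0 : (0 < M)%nat by lia.
    have C := cheb M0 hr.
    have ea : ((M.*2).*2 = 4 * M)%nat by lia.
    have e2 : (M.*2 = 2 * M)%nat by lia.
    rewrite -/Q ea e2 in C.
    have C' : INR (expn 4 (2 * M)) <= INR (muln (muln (muln (4 * M).+1 (expn (4 * M) r.+1)) (expn 4 M)) (expn (4 * M) Q)).
      apply: le_INR. by apply/leP.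
    have i4 : INR 4 = 4 by simpl; lra.
    have i2 : INR 2 = 2 by simpl; lra.
    have e4M : INR (4 * M) = 4 * y by rewrite mult_INR i4.
    rewrite (INR_big ((4 * M).+1)) (INR_expn 4 (2 * M)) (INR_expn (4 * M) r.+1)
      (INR_expn 4 M) (INR_expn (4 * M) Q) (S_INR (4 * M)) e4M i4 in C'.
    have y0 : 0 < y by lra.
    have Cl := lnle _ _ (pow_lt 4 (2 * M) ltac:(lra)) C'.
    rewrite ln_pow in Cl; last lra.
    rewrite ln_mult in Cl; [| |apply: pow_lt; lra]; last first.
      apply: Rmult_lt_0_compat; last by apply: pow_lt; lra.
      apply: Rmult_lt_0_compat; last by apply: pow_lt; lra.
      lra.
    rewrite ln_mult in Cl; [| |apply: pow_lt; lra]; last first.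
      apply: Rmult_lt_0_compat; last by apply: pow_lt; lra.
      lra.
    rewrite ln_mult in Cl; [| lra|apply: pow_lt; lra].
    rewrite !ln_pow in Cl; try lra.
    rewrite mult_INR ?i2 in Cl. rewrite -/y in Cl.
    set LL := ln (8 * y).
    have hA : ln (4 * y + 1) <= LL by apply: lnle; lra.
    have h4 : ln (4 * y) <= LL by apply: lnle; lra.
    have ln4 : 1 <= ln 4.
      have e := ln_pow 2 ltac:(lra) 2. replace (2 ^ 2) with 4 in e by (simpl; lra). rewrite i2 in e.
      have := ln_lt_2. lra.
    have lny1 : 1 <= ln y by apply: Rle_trans ln3_ge1 _; apply: lnle; lra.
    have sq0 : 0 <= sqrt y by apply: sqrt_pos.
    have hsq : sqrt y * sqrt y = y by apply: sqrt_sqrt; lra.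
    set u := sqrt (sqrt y).
    have hu : u * u = sqrt y by apply: sqrt_sqrt.
    have u0 : 0 <= u by apply: sqrt_pos.
    have u12 : 12 <= u.
      have : 144 <= sqrt y by nra.
      nra.
    have hsr : INR s <= sqrt y.
      have hs : INR s * INR s <= y by rewrite -mult_INR /y; apply: le_INR; apply/leP; lia.
      have := pos_INR s. nra.
    have hr1 : INR r.+1 <= 2 * sqrt y + 2.
      rewrite /r S_INR S_INR mult_INR i2. lra.
    have lnu : ln u <= u - 1 by apply: ln_sub1; nra.
    have sqp : 0 < sqrt y by apply: sqrt_lt_R0; lra.
    have lnsq : ln y = 2 * ln (sqrt y).
      rewrite -{1}hsq ln_mult; lra.
    have lnsq2 : ln (sqrt y) = 2 * ln u.
      rewrite -hu ln_mult; nra.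
    have ln8 : ln 8 <= 3.
      have e := ln_pow 2 ltac:(lra) 3. replace (2 ^ 3) with 8 in e by (simpl; lra).
      have i3 : INR 3 = 3 by simpl; lra. rewrite i3 in e.
      have := ln2_le1. lra.
    have hL : LL = ln 8 + ln y by rewrite /LL ln_mult; lra.
    have hL2 : LL <= 4 * u by lra.
    have Lpos : 0 <= LL by have := ln_pos' 8 ltac:(lra); lra.
    have Q0 : 0 <= INR Q by apply: pos_INR.
    have key1 : INR r.+1 * ln (4 * y) <= (2 * sqrt y + 2) * LL.
      apply: Rmult_le_compat => //; [apply: pos_INR | apply: ln_pos'; lra].
    have key2 : INR Q * ln (4 * y) <= INR Q * LL by apply: Rmult_le_compat_l.
    have key3 : (2 * sqrt y + 3) * LL <= 3 / 4 * y.
      have : (2 * (u * u) + 3) * LL <= (2 * (u * u) + 3) * (4 * u) by apply: Rmult_le_compat_l; nra.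
      have ey : y = (u * u) * (u * u) by rewrite hu.
      have h1 : 1 <= 3 / 4 * u - 8 by lra.
      have h2 : 144 <= u * u by nra.
      have h3 : 144 <= (u * u) * (3 / 4 * u - 8) by nra.
      have h4' : (2 * (u * u) + 3) * (4 * u) <= 3 / 4 * ((u * u) * (u * u)) by nra.
      rewrite -hu. lra.
    have key4 : y / 4 <= INR Q * LL by nra.
    have key5 : INR Q * LL <= INR Q * (4 * ln y) by apply: Rmult_le_compat_l; lra.
    nra.
Qed.

Close Scope R_scope.

Fixpoint sumL {A : Type} (f : A -> nat) (l : list A) : nat :=
  match l with [] => 0%nat | x :: t => (f x + sumL f t)%nat end.

Lemma sumL_add {A} (f g : A -> nat) l : sumL (fun x => f x + g x)%nat l = (sumL f l + sumL g l)%nat.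
Proof. elim: l => [|x l IH] //=. rewrite IH. lia. Qed.

Lemma sumL_ext {A} (f g : A -> nat) l : (forall x, In x l -> f x = g x) -> sumL f l = sumL g l.
Proof. elim: l => [|x l IH] //= H. rewrite H ?IH //; auto. Qed.

Lemma sumL_le {A} (f g : A -> nat) l : (forall x, In x l -> (f x <= g x)%nat) -> (sumL f l <= sumL g l)%nat.
Proof. elim: l => [|x l IH] //= H. have := H x (or_introl erefl). have := IH (fun y hy => H y (or_intror hy)). lia. Qed.

Lemma sumL_const {A} (c : nat) (l : list A) : sumL (fun _ => c) l = (length l * c)%nat.
Proof. elim: l => [|x l IH] //=. rewrite IH. lia. Qed.

Lemma sumL_mulc {A} (c : nat) (g : A -> nat) l : sumL (fun x => c * g x)%nat l = (c * sumL g l)%nat.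
Proof. elim: l => [|x l IH] /=; [lia| rewrite IH; lia]. Qed.

Lemma len_filter_sum {A} (f : A -> bool) l : length (List.filter f l) = sumL (fun z => if f z then 1 else 0)%nat l.
Proof. elim: l => [|x l IH] //=. case: (f x) => /=; lia. Qed.

Lemma exch {A B} (r : A -> B -> bool) (P : list A) (L : list B) :
  sumL (fun p => length (List.filter (r p) L)) P = sumL (fun z => length (List.filter (fun p => r p z) P)) L.
Proof.
elim: P => [|p P IH] /=.
  rewrite sumL_const; lia.
rewrite IH len_filter_sum -sumL_add. apply: sumL_ext => z _. by case: (r p z).
Qed.

Lemma filter_compl {A} (f : A -> bool) l :
  (length (List.filter f l) + length (List.filter (fun x => negb (f x)) l))%nat = length l.
Proof. elim: l => [|x l IH] //=. case: (f x) => /=; lia. Qed.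

Lemma sum_ge_count {A} (g : A -> nat) (t : nat) l :
  (length (List.filter (fun p => Nat.ltb t (g p)) l) * t.+1 <= sumL g l)%nat.
Proof.
elim: l => [|x l IH] //=. case E: (Nat.ltb t (g x)) => /=; move/Nat.ltb_spec0: E; lia.
Qed.

Lemma sum_lt_all {A} (g : A -> nat) (k : nat) l :
  (forall p, In p l -> (2 * g p + 1 <= k)%nat) -> (2 * sumL g l + length l <= length l * k)%nat.
Proof.
elim: l => [|x l IH] //= H. have := H x (or_introl erefl). have := IH (fun y hy => H y (or_intror hy)). lia.
Qed.

Section Greedy.
Variables (P : list Z) (f : Z -> Z -> nat) (W : nat) (X : list Z).
Hypothesis HP : (0 < length P)%nat.
Hypothesis HW : forall x, In x X -> (sumL (fun p => f p x) P <= W)%nat.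

Definition good (p x : Z) : bool := Nat.leb (length P * f p x) (2 * W).

Lemma markov x : In x X -> (2 * length (List.filter (fun p => negb (good p x)) P) <= length P)%nat.
Proof.
move=> hx.
have e : List.filter (fun p => negb (good p x)) P = List.filter (fun p => Nat.ltb (2 * W) (length P * f p x)) P.
  apply: filter_ext => p. rewrite /good. case: (Nat.leb_spec0 (length P * f p x) (2 * W)); case: (Nat.ltb_spec0 (2*W) (length P * f p x)); lia.
rewrite e.
have h1 := sum_ge_count (fun p => length P * f p x)%nat (2 * W) P.
have h2 : (sumL (fun p => length P * f p x)%nat P = length P * sumL (fun p => f p x) P)%nat.
  by rewrite sumL_mulc.
have h3 := HW x hx.
rewrite h2 in h1.
set c := length _ in h1 *. set Q := length P in h1 *.
have h4 : (Q * sumL (f^~ x) P <= Q * W)%nat by apply: leq_mul.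
have h5 : (c * (2 * W).+1 <= Q * W)%nat by lia.
case: (Nat.le_gt_cases (2 * c) Q) => h6; [lia|].
have : ((Q + 1) * (2 * W).+1 <= 2 * (c * (2 * W).+1))%nat by nia.
nia.
Qed.

Lemma exists_good (Y : list Z) : (forall y, In y Y -> In y X) ->
  exists p, In p P /\ (length Y <= 2 * length (List.filter (good p) Y))%nat.
Proof.
move=> HY.
case: (classic (exists p, In p P /\ (length Y <= 2 * length (List.filter (good p) Y))%nat)) => // H.
exfalso.
have H' : forall p, In p P -> (2 * length (List.filter (good p) Y) + 1 <= length Y)%nat.
  move=> p hp. case: (Nat.le_gt_cases (length Y) (2 * length (List.filter (good p) Y))) => h.
    by case: H; exists p; split => //; apply/leP.
  lia.
have h1 := sum_lt_all _ _ _ H'.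
rewrite (exch good P Y) in h1.
have h2 : (sumL (fun _ => length P) Y <= 2 * sumL (fun z => length (List.filter (fun p => good p z) P)) Y)%nat.
  have -> : (2 * sumL (fun z => length (List.filter (fun p => good p z) P)) Y = sumL (fun z => 2 * length (List.filter (fun p => good p z) P)) Y)%nat.
    by rewrite sumL_mulc.
  apply: sumL_le => z hz. have := markov z (HY z hz). have := filter_compl (fun p => good p z) P. lia.
rewrite sumL_const in h2. nia.
Qed.

Lemma greedy_cover n : forall (Y : list Z), length Y = n -> Y <> [] -> (forall y, In y Y -> In y X) ->
  exists M, NoDup M /\ M <> [] /\ (forall m, In m M -> In m P) /\ (2 ^ (length M - 1) <= length Y)%nat /\
   forall y, In y Y -> exists m, In m M /\ good m y.
Proof.
elim/ltn_ind: n => n IH Y hn hY HY.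
have [p [hp hg]] := exists_good Y HY.
set Y' := List.filter (fun y => negb (good p y)) Y.
have hc := filter_compl (good p) Y.
have lenY : (0 < length Y)%nat by case: (Y) hY => //= *; lia.
have hY'sub : forall y, In y Y' -> In y X by move=> y /filter_In [hy _]; apply: HY.
have cov : forall y, In y Y -> good p y \/ In y Y'.
  move=> y hy. case E: (good p y); [by left| right; apply/filter_In; rewrite E]. done.
case: (list_eq_dec Z.eq_dec Y' []) => hY'.
- exists [p]; split; [by constructor; [move=> []|constructor]|split => //; split].
    by move=> m [<-|[]].
  split; first by simpl; lia.
  move=> y hy. case: (cov y hy) => h; first by exists p; split => //; left.
  by rewrite hY' in h.
- have [M' [nd [ne [sub [pw cv]]]]] := IH (length Y') ltac:(rewrite /Y'; lia) Y' erefl hY' hY'sub.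
  case: (in_dec Z.eq_dec p M') => hpM.
  + exists M'; split => //; split => //; split => //; split.
      rewrite /Y' in pw; lia.
    move=> y hy. case: (cov y hy) => h; first by exists p.
    exact: cv.
  + exists (p :: M'); split; [by constructor|split => //; split].
      by move=> m [<-|hm]; [|apply: sub].
    split.
      have hl : (0 < length M')%nat by case: (M') ne => //= *; lia.
      have -> : (length (p :: M') - 1 = (length M' - 1).+1)%nat by rewrite /=; lia.
      rewrite Nat.pow_succ_r'. rewrite /Y' in pw. lia.
    move=> y hy. case: (cov y hy) => h; first by exists p; split => //; left.
    have [m [hm gm]] := cv y h. by exists m; split => //; right.
Qed.
End Greedy.

Fixpoint prodZ (l : list Z) : Z := match l with [] => 1%Z | x :: t => (x * prodZ t)%Z end.

Lemma prime_dvd_prodZ p l : Znumtheory.prime p -> (p | prodZ l)%Z -> exists q, In q l /\ (p | q)%Z.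
Proof.
move=> pp. elim: l => [|q l IH] /= h.
  have := Znumtheory.prime_ge_2 _ pp. have := Z.divide_pos_le p 1 ltac:(lia) h. lia.
case: (Znumtheory.prime_mult _ pp _ _ h) => h'.
  by exists q; split => //; left.
have [q' [hq' hd]] := IH h'. by exists q'; split => //; right.
Qed.

Lemma div_count_aux (d : Z) (P : list Z) : NoDup P -> (forall p, In p P -> Znumtheory.prime p) ->
  (prodZ (List.filter (fun p => Z.eqb (d mod p) 0) P) | d)%Z /\
  (2 ^ Z.of_nat (length (List.filter (fun p => Z.eqb (d mod p) 0) P)) <= prodZ (List.filter (fun p => Z.eqb (d mod p) 0) P))%Z.
Proof.
elim: P => [|p P IH] nd hpr /=.
  split; [exact: Z.divide_1_l | lia].
move/NoDup_cons_iff: nd => [pn nd].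
have hpr' : forall q, In q P -> Znumtheory.prime q by move=> q hq; apply: hpr; right.
have pp : Znumtheory.prime p by apply: hpr; left.
have p2 := Znumtheory.prime_ge_2 _ pp.
have [IH1 IH2] := IH nd hpr'.
case E: (Z.eqb (d mod p) 0); last by [].
move/Z.eqb_eq: E => E.
set F := List.filter _ P in IH1 IH2 *.
have pd : (p | d)%Z by apply/Z.mod_divide; lia.
have npF : ~ (p | prodZ F)%Z.
  move=> h. have [q [hq hpq]] := prime_dvd_prodZ p F pp h.
  move/filter_In: hq => [hq _].
  have := Znumtheory.prime_div_prime _ _ pp (hpr' q hq) hpq. move=> epq. by rewrite epq in pn.
have rp := Znumtheory.prime_rel_prime _ pp _ npF.
case: IH1 => k hk.
have : (p | prodZ F * k)%Z by rewrite Z.mul_comm -hk.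
move=> h. have [j hj] := Znumtheory.Gauss _ _ _ h rp.
split.
  exists j. rewrite hk hj /=. ring.
change (2 ^ Z.of_nat (S (length F)) <= p * prodZ F)%Z.
rewrite Nat2Z.inj_succ Z.pow_succ_r; last lia.
have : (0 < 2 ^ Z.of_nat (length F))%Z by apply: Z.pow_pos_nonneg; lia.
nia.
Qed.

Lemma count_le_D (d U : Z) (P : list Z) : NoDup P -> (forall p, In p P -> Znumtheory.prime p) ->
  d <> 0%Z -> (Z.abs d < 2 * U)%Z ->
  (length (List.filter (fun p => Z.eqb (d mod p) 0) P) <= Z.to_nat (Z.log2 (2 * U)))%nat.
Proof.
move=> nd hpr d0 dU.
have [h1 h2] := div_count_aux d P nd hpr.
set F := List.filter _ P in h1 h2 *.
have pos : (0 < prodZ F)%Z by have := Z.pow_pos_nonneg 2 (Z.of_nat (length F)); lia.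
have h3 : (prodZ F <= Z.abs d)%Z.
  apply: Z.divide_pos_le; first lia. by apply/Z.divide_abs_r.
have h4 : (2 ^ Z.of_nat (length F) <= 2 * U)%Z by lia.
have h5 := proj1 (Z.log2_le_pow2 (2 * U) (Z.of_nat (length F)) ltac:(lia)) h4.
lia.
Qed.

Lemma sum_bad (A B P : list Z) (U x : Z) :
  subset_range U A -> subset_range U B -> (0 <= x < U)%Z ->
  NoDup P -> (forall p, In p P -> Znumtheory.prime p) ->
  (sumL (fun p => bad_count A B p x) P <= length A * length B * Z.to_nat (Z.log2 (2 * U)))%nat.
Proof.
move=> hA hB hx nd hpr.
set r := fun (p : Z) (z : Z * Z) => (Z.eqb ((fst z + snd z - x) mod p) 0 && negb (Z.eqb (fst z + snd z) x))%bool.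
have E : sumL (fun p => bad_count A B p x) P = sumL (fun p => length (List.filter (r p) (list_prod A B))) P by [].
rewrite E exch.
set D := Z.to_nat _.
apply: leq_trans (_ : (sumL (fun _ => D) (list_prod A B) <= _)%nat).
  apply: sumL_le => -[a b] /in_prod_iff [ha hb].
  have := hA a ha. have := hB b hb. move=> hb' ha'.
  case: (Z.eq_dec (a + b) x) => e.
    have -> : List.filter (fun p => r p (a, b)) P = [].
      rewrite (filter_ext _ (fun _ => false)); last by move=> p; rewrite /r /= e Z.eqb_refl andbF.
      by elim: (P).
    by [].
  rewrite (filter_ext _ (fun p => Z.eqb ((a + b - x) mod p) 0)); last first.
    move=> p; rewrite /r /=. by move/Z.eqb_neq: e => ->; rewrite andbT.
  apply: count_le_D => //; lia.
rewrite sumL_const length_prod. lia.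
Qed.

Open Scope R_scope.

Lemma nodup_range_len (U : Z) (A : list Z) : (0 <= U)%Z -> NoDup A -> subset_range U A ->
  (Z.of_nat (length A) <= U)%Z.
Proof.
move=> U0 nd sA.
have : (length A <= length (List.map Z.of_nat (List.seq 0 (Z.to_nat U))))%coq_nat.
  apply: NoDup_incl_length => // a ha.
  have := sA a ha => h. apply/in_map_iff. exists (Z.to_nat a); split; first lia.
  apply/in_seq; lia.
rewrite length_map length_seq. lia.
Qed.

Theorem mainTheorem8 :
  exists K : R, K > 0 /\
  forall (U n : Z) (A B X : list Z),
    (2 <= U)%Z -> (2 <= n)%Z ->
    NoDup A -> NoDup B -> NoDup X ->
    subset_range U A -> subset_range U B -> subset_range U X ->
    Z.of_nat (length A) = n -> Z.of_nat (length B) = n ->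
    X <> nil ->
    exists M : list Z,
      NoDup M /\
      INR (length M) <= 1 + ln (INR (length X)) / ln 2 /\
      (forall m, In m M ->
         Rpower (IZR n) (3/2) <= IZR m /\ IZR m < 8 * Rpower (IZR n) (3/2)) /\
      (forall x, In x X -> exists m, In m M /\
         INR (bad_count A B m x) <= K * sqrt (IZR n) * (ln (IZR U)) ^ 3).
Proof.
exists 960000; split; first lra.
move=> U n A B X hU hn nA nB nX sA sB sX lA lB Xne.
have nU : (n <= U)%Z by rewrite -lA; apply: nodup_range_len => //; lia.
set nR := IZR n.
have nR2 : 2 <= nR by apply: IZR_le.
have nRU : nR <= IZR U by apply: IZR_le.
set s := sqrt nR.
have s0 : 0 <= s by apply: sqrt_pos.
have ss : s * s = nR by apply: sqrt_sqrt; lra.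
have s14 : 1.4 <= s by nra.
set x15 := Rpower nR (3/2).
have ex15 : x15 = nR * s.
  rewrite /x15. replace (3/2) with (1 + /2) by field.
  rewrite Rpower_plus Rpower_1 ?Rpower_sqrt //; lra.
have [arch1 arch2] := archimed x15.
set N0 := up x15 in arch1 arch2.
have x15ge : 2 <= x15 by rewrite ex15; nra.
have N03 : (3 <= N0)%Z.
  have : (2 < N0)%Z by apply: lt_IZR; lra.
  lia.
set M := Z.to_nat N0.
have eM : INR M = IZR N0 by rewrite INR_IZR_INZ /M Z2Nat.id //; lia.
have eMZ : Z.of_nat M = N0 by rewrite /M Z2Nat.id //; lia.
have M3 : (3 <= M)%nat by rewrite /M; lia.
have [P [ndP [hP dens]]] := prime_density M M3.
rewrite eM in dens. rewrite eMZ in hP.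
set y := IZR N0 in arch1 arch2 dens eM.
have y0 : 3 <= y by apply: (IZR_le 3); lia.
have lny0 : 1 <= ln y.
  apply: Rle_trans ln3_ge1 _. apply: lnle; lra.
set Q := length P in dens.
have Q0 : (0 < Q)%nat.
  case: (Nat.eq_dec Q 0) => hQ; last by lia.
  rewrite hQ /= in dens. lra.
set D := Z.to_nat (Z.log2 (2 * U)).
set W := (length A * length B * D)%nat.
have HW : forall x, In x X -> (sumL (fun p => bad_count A B p x) P <= W)%nat.
  move=> x hx. apply: sum_bad => //. exact: sX.
  by move=> p hp; case: (hP p hp).
have [Mc [ndM [neM [subM [pw cv]]]]] :=
  greedy_cover P (fun p x => bad_count A B p x) W X Q0 HW (length X) X erefl Xne (fun y h => h).
exists Mc; split => //; split; [|split].
-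
  set L := length Mc.
  have L1 : (1 <= L)%nat by rewrite /L; case: (Mc) neM => //= *; lia.
  have hpw : INR (Nat.pow 2 (L - 1)) <= INR (length X) by apply: le_INR; apply/leP.
  rewrite pow_INR in hpw.
  have i2 : INR 2 = 2 by simpl; lra.
  rewrite i2 in hpw.
  have Xpos : (0 < length X)%nat by case: (X) Xne => //= *; lia.
  have hl := lnle _ _ (pow_lt 2 (L - 1) ltac:(lra)) hpw.
  rewrite ln_pow in hl; last lra.
  rewrite minus_INR in hl; last by apply/leP.
  have ln2 := ln_lt_2.
  change 1%nat with (S O) in hl. rewrite (INR_IZR_INZ 1) /= in hl.
  have : INR L - 1 <= ln (INR (length X)) / ln 2.
    apply: (Rmult_le_reg_r (ln 2)); first lra.
    rewrite /Rdiv Rmult_assoc Rinv_l; lra.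
  lra.
- move=> m hm. have [_ [hm1 hm2]] := hP m (subM m hm).
  have h1 : y + 1 <= IZR m by rewrite /y -plus_IZR; apply: IZR_le; lia.
  have h2 : IZR m <= 4 * y by rewrite /y -(mult_IZR 4); apply: IZR_le; lia.
  split; lra.
- move=> x hx. have [m [hm gm]] := cv x hx.
  exists m; split => //.
  move: gm; rewrite /good => /Nat.leb_spec0 gm.
  set bad := bad_count A B m x in gm *.
  have gR : INR Q * INR bad <= 2 * (nR * nR) * INR D.
    have e1 : INR Q * INR bad = INR (Q * bad)%coq_nat by rewrite mult_INR.
    rewrite e1. apply: Rle_trans (le_INR _ _ gm) _.
    have e2 : INR (2 * W)%coq_nat = 2 * (INR (length A) * INR (length B)) * INR D.
      rewrite /W !mult_INR. simpl (INR 2). ring.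
    rewrite e2 (INR_IZR_INZ (length A)) (INR_IZR_INZ (length B)) lA lB -/nR. lra.
  have U0 : 2 <= IZR U by apply: IZR_le.
  have hD : INR D * ln 2 <= 2 * ln (IZR U).
    have [hl _] := Z.log2_spec (2 * U) ltac:(lia).
    have hl2 : (0 <= Z.log2 (2 * U))%Z by apply: Z.log2_nonneg.
    have eD : INR D = IZR (Z.log2 (2 * U)) by rewrite INR_IZR_INZ /D Z2Nat.id.
    have : 2 ^ D <= 2 * IZR U.
      rewrite (pow_IZR 2) /D Z2Nat.id // -(mult_IZR 2). apply: IZR_le. lia.
    move=> h. have := lnle _ _ (pow_lt 2 D ltac:(lra)) h.
    rewrite ln_pow; last lra.
    move=> h'. apply: Rle_trans h' _.
    rewrite ln_mult; try lra.
    have : ln 2 <= ln (IZR U) by apply: lnle; lra.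
    lra.
  have ln2 := ln_lt_2.
  have lnU : / 2 < ln (IZR U) by apply: Rlt_le_trans ln2 _; apply: lnle; lra.
  have D4 : INR D <= 4 * ln (IZR U).
    have D0 := pos_INR D. nra.
  have hy1 : x15 <= y by lra.
  have hy2 : y <= nR * nR.
    have : s * s * s + 1 <= s * s * (s * s).
      have h3 : 2.7 <= s * s * s by nra.
      nra.
    have e1 : x15 = s * s * s by rewrite ex15 -ss; ring.
    have e2 : nR * nR = s * s * (s * s) by rewrite ss.
    lra.
  have lny : ln y <= 2 * ln (IZR U).
    have : y <= IZR U * IZR U by nra.
    move=> h. have := lnle y _ ltac:(lra) h. rewrite ln_mult; lra.
  have QR : 1 <= INR Q by apply: (le_INR 1); apply/leP.
  have bad0 := pos_INR bad.
  have nn : nR * nR <= y * s by rewrite -ss; nra.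
  have step1 : INR Q * INR bad <= 2 * y * s * INR D.
    apply: Rle_trans gR _. have := pos_INR D. nra.
  have step2 : INR Q * INR bad <= 2 * (30000 * INR Q * ln y) * s * INR D.
    apply: Rle_trans step1 _. have := pos_INR D => hD0.
    have sD : 0 <= 2 * s * INR D by nra.
    replace (2 * y * s * INR D) with (y * (2 * s * INR D)) by ring.
    replace (2 * (30000 * INR Q * ln y) * s * INR D) with ((30000 * INR Q * ln y) * (2 * s * INR D)) by ring.
    by apply: Rmult_le_compat_r.
  have step3 : INR bad <= 60000 * ln y * s * INR D.
    apply: (Rmult_le_reg_l (INR Q)); first lra.
    apply: Rle_trans step2 _. right; ring.
  have lnUpos : 0 < ln (IZR U) by lra.
  have step4 : INR bad <= 60000 * (2 * ln (IZR U)) * s * (4 * ln (IZR U)).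
    apply: Rle_trans step3 _.
    have := pos_INR D => hD0.
    have h60 : 0 <= 60000 * ln y * s by nra.
    have : 60000 * ln y * s * INR D <= 60000 * ln y * s * (4 * ln (IZR U)) by apply: Rmult_le_compat_l.
    have : 60000 * ln y * s * (4 * ln (IZR U)) <= 60000 * (2 * ln (IZR U)) * s * (4 * ln (IZR U)).
      replace (60000 * ln y * s * (4 * ln (IZR U))) with (ln y * (60000 * s * (4 * ln (IZR U)))) by ring.
      replace (60000 * (2 * ln (IZR U)) * s * (4 * ln (IZR U))) with ((2 * ln (IZR U)) * (60000 * s * (4 * ln (IZR U)))) by ring.
      apply: Rmult_le_compat_r => //. nra.
    lra.
  rewrite -/s.
  have : ln (IZR U) * ln (IZR U) <= 2 * (ln (IZR U)) ^ 3.
    have : 1 <= 2 * ln (IZR U) by lra.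
    simpl. nra.
  simpl. nra.
Qed.
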